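(* Let $(V,\varphi,\xi,\eta,g)$ with $n\ge2$, the space $\mathcal{F}$, the inner product $\langle\cdot,\cdot\rangle$, the group $G$, the subspace $W_1$ and the subspaces $\mathcal{F}_1,\mathcal{F}_2,\mathcal{F}_3$ be as in the context. Then $W_1=\mathcal{F}_1\oplus\mathcal{F}_2\oplus\mathcal{F}_3$, the summands are mutually orthogonal with respect to $\langle\cdot,\cdot\rangle$, and each is invariant under the action of $G$.
   Context: Let $V$ be a real vector space of dimension $2n+1$ with an endomorphism $\varphi$, a vector $\xi$ and a linear form $\eta$ such that $\varphi\xi=0$, $\eta\circ\varphi=0$, $\eta(\xi)=1$, $\varphi^2=\mathrm{id}-\eta\otimes\xi$, and such that $\varphi$ restricted to $\mathbb{D}=\ker\eta$ has eigenvalues $\pm1$ with eigenspaces of equal dimension $n$. Let $g$ be a nondegenerate symmetric bilinear form on $V$ with $g(\varphi X,\varphi Y)=-g(X,Y)+\eta(X)\eta(Y)$; then $\eta(X)=g(X,\xi)$. Write $hX=X-\eta(X)\xi$. Fix a basis $\{e_1,\dots,e_{2n}\}$ of $\mathbb{D}$, write $Y=Y^ie_i+\eta(Y)\xi$. Let $\mathcal{F}$ be the vector space of all $(0,3)$-tensors of the form $F(X,Y,Z)=Y^ig(\mathcal{A}_{e_i}X,Z)+\eta(Y)g(\mathcal{A}_\xi X,\varphi Z)$, where $\mathcal{A}_{e_i}:V\to V$ and $\mathcal{A}_\xi:V\to\mathbb{D}$ are linear maps satisfying for all $X$, $i,j$: $g(\mathcal{A}_{e_i}X,e_j)=-g(\mathcal{A}_{e_j}X,e_i)$;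 $\mathcal{A}_{\varphi e_i}X=-\varphi(\mathcal{A}_{e_i}X)-g(\mathcal{A}_\xi X,e_i)\xi$ (index extended linearly); $\eta(\mathcal{A}_{e_i}X)=-g(\mathcal{A}_\xi X,\varphi e_i)$; $\eta(\mathcal{A}_\xi X)=0$. Inner product: $\langle F_1,F_2\rangle=g^{aq}g^{br}g^{cs}F_1(f_a,f_b,f_c)F_2(f_q,f_r,f_s)$ for a basis $\{f_a\}$ of $V$, $(g^{ab})$ inverse of $(g(f_a,f_b))$. For $F\in\mathcal{F}$ put $\theta_F(X)=g^{ab}F(f_a,f_b,X)$. $G$ is the group of linear automorphisms $a$ of $V$ with $a\varphi=\varphi a$, $a\xi=\xi$, $\eta\circ a=\eta$, $g(aX,aY)=g(X,Y)$, acting by $(\lambda(a)F)(X,Y,Z)=F(a^{-1}X,a^{-1}Y,a^{-1}Z)$. Let $W_1=\{F\in\mathcal{F}:F(X,Y,Z)=F(hX,hY,hZ)\ \forall X,Y,Z\}$. On $W_1$ define $m_1(F)(X,Y,Z)=\tfrac12\{F(X,Y,Z)-F(\varphi X,Y,\varphi Z)\}$ and $m_2(F)(X,Y,Z)=\tfrac12\{F(X,Y,Z)+F(\varphi X,Y,\varphi Z)\}$; $W_{11}=\mathrm{Im}\,m_1$, $\mathcal{F}_3=\mathrm{Im}\,m_2$. On $W_{11}$ define $m_3(F)(X,Y,Z)=F(X,Y,Z)-\frac{1}{2(n-1)}\{g(X,\varphi Y)\theta_F(\varphi Z)-g(X,\varphi Z)\theta_F(\varphi Y)-g(\varphi X,\varphi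 Y)\theta_F(Z)+g(\varphi X,\varphi Z)\theta_F(Y)\}$; $\mathcal{F}_1=\ker m_3$ and $\mathcal{F}_2=\mathrm{Im}\,m_3$ (subspaces of $W_{11}$). *)

(* Defs.v *)
From HB Require Import structures.
From mathcomp Require Import all_boot all_order all_algebra.
From mathcomp Require Import reals.
Set Implicit Arguments. Unset Strict Implicit. Unset Printing Implicit Defensive.
Import Order.TTheory GRing.Theory Num.Theory.
Local Open Scope ring_scope.

(* Conventions: V = 'rV[R]_N with N = 2n+1 (row vectors); a linear map
   X |-> f X is represented by a matrix M acting on the right, f X = X *m M. *)

Section Defs.
Variable R : realType.

Definition bil {N} (Gm : 'M[R]_N) (X Y : 'rV[R]_N) : R := (X *m Gm *m Y^T) 0 0.
Definition lin {N} (c : 'cV[R]_N) (X : 'rV[R]_N) : R := (X *m c) 0 0.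
Definition hproj {N} (xi : 'rV[R]_N) (eta : 'cV[R]_N) (X : 'rV[R]_N) : 'rV[R]_N :=
  X - lin eta X *: xi.

Definition apc_struct (n : nat) (Phi : 'M[R]_(n.*2.+1)) (xi : 'rV[R]_(n.*2.+1))
    (eta : 'cV[R]_(n.*2.+1)) (Gm : 'M[R]_(n.*2.+1)) : Prop :=
  xi *m Phi = 0 /\
      (forall X, lin eta (X *m Phi) = 0) /\
      lin eta xi = 1 /\
      (forall X, X *m Phi *m Phi = X - lin eta X *: xi) /\
      \rank (eigenspace Phi 1 :&: kermx eta)%MS = n /\
      \rank (eigenspace Phi (-1) :&: kermx eta)%MS = n /\
      Gm^T = Gm /\
      Gm \in unitmx /\
      (forall X Y, bil Gm (X *m Phi) (Y *m Phi) = - bil Gm X Y + lin eta X * lin eta Y).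

Definition is_basis_D (n : nat) (E : 'M[R]_(n.*2, n.*2.+1)) (eta : 'cV[R]_(n.*2.+1)) : bool :=
  row_free E && (E == kermx eta)%MS.

Definition coords (n : nat) (E : 'M[R]_(n.*2, n.*2.+1)) (v : 'rV[R]_(n.*2.+1)) : 'rV[R]_(n.*2) :=
  v *m pinvmx E.

(* A_v := v^j A_{e_j} for v in D (the index extended linearly) *)
Definition Aext (n : nat) (E : 'M[R]_(n.*2, n.*2.+1)) (Ae : 'I_(n.*2) -> 'M[R]_(n.*2.+1))
    (v : 'rV[R]_(n.*2.+1)) : 'M[R]_(n.*2.+1) :=
  \sum_(j < n.*2) (coords E v) 0 j *: Ae j.

Definition tensor3 (N : nat) := 'rV[R]_N -> 'rV[R]_N -> 'rV[R]_N -> R.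

Definition teq {N} (T S : tensor3 N) : Prop := forall X Y Z, T X Y Z = S X Y Z.
Definition tadd3 {N} (T1 T2 T3 : tensor3 N) : tensor3 N :=
  fun X Y Z => T1 X Y Z + T2 X Y Z + T3 X Y Z.

Definition calF (n : nat) (Phi : 'M[R]_(n.*2.+1)) (xi : 'rV[R]_(n.*2.+1))
    (eta : 'cV[R]_(n.*2.+1)) (Gm : 'M[R]_(n.*2.+1)) (E : 'M[R]_(n.*2, n.*2.+1))
    (T : tensor3 n.*2.+1) : Prop :=
  exists (Ae : 'I_(n.*2) -> 'M[R]_(n.*2.+1)) (Axi : 'M[R]_(n.*2.+1)),
      (forall X : 'rV[R]_(n.*2.+1), (X *m Axi <= kermx eta)%MS) /\
      (forall X (i j : 'I_(n.*2)),
         bil Gm (X *m Ae i) (row j E) = - bil Gm (X *m Ae j) (row i E)) /\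
      (forall X (i : 'I_(n.*2)),
         X *m Aext E Ae (row i E *m Phi)
         = - (X *m Ae i *m Phi) - bil Gm (X *m Axi) (row i E) *: xi) /\
      (forall X (i : 'I_(n.*2)),
         lin eta (X *m Ae i) = - bil Gm (X *m Axi) (row i E *m Phi)) /\
      (forall X, lin eta (X *m Axi) = 0) /\
      (forall X Y Z,
         T X Y Z = \sum_(i < n.*2) (coords E (hproj xi eta Y)) 0 i * bil Gm (X *m Ae i) Z
                   + lin eta Y * bil Gm (X *m Axi) (Z *m Phi)).

Definition fb {N} (a : 'I_N) : 'rV[R]_N := delta_mx 0 a.

Definition tip {N} (Gm : 'M[R]_N) (T1 T2 : tensor3 N) : R :=
  \sum_(a < N) \sum_(b < N) \sum_(c < N) \sum_(q < N) \sum_(r < N) \sum_(s < N)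
    invmx Gm a q * invmx Gm b r * invmx Gm c s
    * T1 (fb a) (fb b) (fb c) * T2 (fb q) (fb r) (fb s).

Definition theta {N} (Gm : 'M[R]_N) (T : tensor3 N) (X : 'rV[R]_N) : R :=
  \sum_(a < N) \sum_(b < N) invmx Gm a b * T (fb a) (fb b) X.

Definition inG {N} (Phi : 'M[R]_N) (xi : 'rV[R]_N) (eta : 'cV[R]_N) (Gm : 'M[R]_N)
    (A : 'M[R]_N) : Prop :=
  [/\ A \in unitmx,
      A *m Phi = Phi *m A,
      xi *m A = xi,
      (forall X, lin eta (X *m A) = lin eta X) &
      (forall X Y, bil Gm (X *m A) (Y *m A) = bil Gm X Y)].

Definition gact {N} (A : 'M[R]_N) (T : tensor3 N) : tensor3 N :=
  fun X Y Z => T (X *m invmx A) (Y *m invmx A) (Z *m invmx A).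

Definition W1 (n : nat) (Phi : 'M[R]_(n.*2.+1)) (xi : 'rV[R]_(n.*2.+1))
    (eta : 'cV[R]_(n.*2.+1)) (Gm : 'M[R]_(n.*2.+1)) (E : 'M[R]_(n.*2, n.*2.+1))
    (T : tensor3 n.*2.+1) : Prop :=
  calF Phi xi eta Gm E T /\
  forall X Y Z, T X Y Z = T (hproj xi eta X) (hproj xi eta Y) (hproj xi eta Z).

Definition m1 {N} (Phi : 'M[R]_N) (T : tensor3 N) : tensor3 N :=
  fun X Y Z => 2^-1 * (T X Y Z - T (X *m Phi) Y (Z *m Phi)).
Definition m2 {N} (Phi : 'M[R]_N) (T : tensor3 N) : tensor3 N :=
  fun X Y Z => 2^-1 * (T X Y Z + T (X *m Phi) Y (Z *m Phi)).

Definition m3 (n : nat) (Phi Gm : 'M[R]_(n.*2.+1)) (T : tensor3 n.*2.+1) : tensor3 n.*2.+1 :=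
  fun X Y Z => T X Y Z - ((n.-1).*2)%:R^-1 *
    (bil Gm X (Y *m Phi) * theta Gm T (Z *m Phi)
     - bil Gm X (Z *m Phi) * theta Gm T (Y *m Phi)
     - bil Gm (X *m Phi) (Y *m Phi) * theta Gm T Z
     + bil Gm (X *m Phi) (Z *m Phi) * theta Gm T Y).

Definition W11 (n : nat) (Phi : 'M[R]_(n.*2.+1)) (xi : 'rV[R]_(n.*2.+1))
    (eta : 'cV[R]_(n.*2.+1)) (Gm : 'M[R]_(n.*2.+1)) (E : 'M[R]_(n.*2, n.*2.+1))
    (T : tensor3 n.*2.+1) : Prop :=
  exists S, W1 Phi xi eta Gm E S /\ teq T (m1 Phi S).
Definition F3 (n : nat) (Phi : 'M[R]_(n.*2.+1)) (xi : 'rV[R]_(n.*2.+1))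
    (eta : 'cV[R]_(n.*2.+1)) (Gm : 'M[R]_(n.*2.+1)) (E : 'M[R]_(n.*2, n.*2.+1))
    (T : tensor3 n.*2.+1) : Prop :=
  exists S, W1 Phi xi eta Gm E S /\ teq T (m2 Phi S).
Definition F1 (n : nat) (Phi : 'M[R]_(n.*2.+1)) (xi : 'rV[R]_(n.*2.+1))
    (eta : 'cV[R]_(n.*2.+1)) (Gm : 'M[R]_(n.*2.+1)) (E : 'M[R]_(n.*2, n.*2.+1))
    (T : tensor3 n.*2.+1) : Prop :=
  W11 Phi xi eta Gm E T /\ teq (m3 Phi Gm T) (fun _ _ _ => 0).
Definition F2 (n : nat) (Phi : 'M[R]_(n.*2.+1)) (xi : 'rV[R]_(n.*2.+1))
    (eta : 'cV[R]_(n.*2.+1)) (Gm : 'M[R]_(n.*2.+1)) (E : 'M[R]_(n.*2, n.*2.+1))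
    (T : tensor3 n.*2.+1) : Prop :=
  exists S, W11 Phi xi eta Gm E S /\ teq T (m3 Phi Gm S).

End Defs.

(* Main.v *)
Require Import Defs.
From HB Require Import structures.
From mathcomp Require Import all_boot all_order all_algebra.
From mathcomp Require Import reals.
From mathcomp Require Import ring zify lra.
Import Order.TTheory GRing.Theory Num.Theory.
Local Open Scope ring_scope.
Set Implicit Arguments. Unset Strict Implicit. Unset Printing Implicit Defensive.
Section Proof.
Variable R : realType.
Variable n : nat.
Local Notation N := (n.*2.+1).
Variables (Phi : 'M[R]_N) (xi : 'rV[R]_N) (eta : 'cV[R]_N) (Gm : 'M[R]_N)
  (E : 'M[R]_(n.*2, N)).
Hypothesis xiPhi : xi *m Phi = 0.
Hypothesis etaPhi : forall X, lin eta (X *m Phi) = 0.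
Hypothesis etaxi : lin eta xi = 1.
Hypothesis Phi2 : forall X, X *m Phi *m Phi = X - lin eta X *: xi.
Hypothesis rk1 : \rank (eigenspace Phi 1 :&: kermx eta)%MS = n.
Hypothesis rkm1 : \rank (eigenspace Phi (-1) :&: kermx eta)%MS = n.
Hypothesis Gsym : Gm^T = Gm.
Hypothesis Gunit : Gm \in unitmx.
Hypothesis GPhi : forall X Y, bil Gm (X *m Phi) (Y *m Phi) = - bil Gm X Y + lin eta X * lin eta Y.
Hypothesis Efree : row_free E.
Hypothesis Eker : (E == kermx eta)%MS.
Hypothesis n2 : (2 <= n)%N.

Local Notation g := (bil Gm).
Local Notation et := (lin eta).
Local Notation h := (hproj xi eta).
Local Notation fb := (@fb R N).

Definition islin (f : 'rV[R]_N -> R) := forall a X Y, f (a *: X + Y) = a * f X + f Y.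

Lemma islin0 f : islin f -> f 0 = 0.
Proof. move=> L; have := L 1 0 0; rewrite scaler0 add0r mul1r => H.
by apply: (@addrI _ (f 0)); rewrite -H addr0. Qed.

Lemma islinD f X Y : islin f -> f (X + Y) = f X + f Y.
Proof. by move=> L; rewrite -[X]scale1r L mul1r scale1r. Qed.

Lemma islinZ f a X : islin f -> f (a *: X) = a * f X.
Proof. by move=> L; rewrite -[a *: X]addr0 L (islin0 L) addr0. Qed.

Lemma islinN f X : islin f -> f (- X) = - f X.
Proof. by move=> L; rewrite -scaleN1r islinZ // mulN1r. Qed.

Lemma islinB f X Y : islin f -> f (X - Y) = f X - f Y.
Proof. by move=> L; rewrite islinD // islinN. Qed.

Lemma islin_sum f (I : finType) (c : I -> R) (F : I -> 'rV[R]_N) :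
  islin f -> f (\sum_i c i *: F i) = \sum_i c i * f (F i).
Proof.
move=> L; apply: (big_rec2 (fun x y => f y = x)); first exact: islin0.
by move=> i y1 y2 _ <-; rewrite L.
Qed.

Lemma islin_exp f X : islin f -> f X = \sum_a X 0 a * f (fb a).
Proof. by move=> L; rewrite {1}[X]row_sum_delta islin_sum. Qed.

Lemma bil_sym X Y : g X Y = g Y X.
Proof.
rewrite /bil [LHS](_ : _ = ((X *m Gm *m Y^T)^T) 0 0); last by rewrite [in RHS]mxE.
by rewrite !trmx_mul trmxK Gsym mulmxA.
Qed.

Lemma islin_bilr X : islin (g X).
Proof. by move=> a Y Z; rewrite /bil linearD linearZ /= mulmxDr -scalemxAr !mxE. Qed.

Lemma islin_bill Y : islin (g ^~ Y).
Proof. by move=> a X Z; rewrite /bil !mulmxDl -!scalemxAl !mxE. Qed.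

Lemma islin_lin : islin et.
Proof. by move=> a X Y; rewrite /lin mulmxDl -scalemxAl !mxE. Qed.

Lemma lin_Phi0 X : et (X *m Phi) = 0. Proof. exact: etaPhi. Qed.

Lemma bil_xi X : g X xi = et X.
Proof.
have := GPhi X xi; rewrite xiPhi etaxi mulr1 {1}/bil trmx0 mulmx0 mxE => /eqP.
by rewrite eq_sym addrC subr_eq0 => /eqP.
Qed.

Lemma bil_xil X : g xi X = et X.
Proof. by rewrite bil_sym bil_xi. Qed.

Lemma PhiPhi X : X *m Phi *m Phi = h X.
Proof. by rewrite Phi2. Qed.

Lemma bil_skew X Y : g (X *m Phi) Y = - g X (Y *m Phi).
Proof.
have := GPhi X (Y *m Phi); rewrite lin_Phi0 mulr0 addr0 PhiPhi => <-.
by rewrite /hproj islinB ?islinZ ?bil_xi ?lin_Phi0 ?mulr0 ?subr0 //; apply: islin_bilr.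
Qed.

Lemma h_Phi X : h X *m Phi = X *m Phi.
Proof. by rewrite /hproj mulmxBl -scalemxAl xiPhi scaler0 subr0. Qed.

Lemma lin_h X : et (h X) = 0.
Proof. by rewrite /hproj islinB ?islinZ ?etaxi ?mulr1 ?subrr //; apply: islin_lin. Qed.

Lemma h_h X : h (h X) = h X.
Proof. by rewrite {1}/hproj lin_h scale0r subr0. Qed.

Lemma h_xi : h xi = 0.
Proof. by rewrite /hproj etaxi scale1r subrr. Qed.

Lemma h_lin a X Y : h (a *: X + Y) = a *: h X + h Y.
Proof.
rewrite /hproj islin_lin scalerDl scalerBr -scalerA.
by rewrite addrACA -opprD.
Qed.

Lemma hPhi X : h (X *m Phi) = X *m Phi.
Proof. by rewrite /hproj lin_Phi0 scale0r subr0. Qed.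

Lemma bil_hl X Y : g (h X) Y = g X Y - et X * et Y.
Proof. by rewrite /hproj (islinB _ _ (islin_bill Y)) (islinZ _ _ (islin_bill Y)) bil_xil. Qed.

Lemma bil_hr X Y : g X (h Y) = g X Y - et X * et Y.
Proof. by rewrite bil_sym bil_hl bil_sym mulrC. Qed.

Lemma bilPhiPhi X Y : g (X *m Phi) (Y *m Phi) = - g (h X) Y.
Proof. by rewrite GPhi bil_hl opprB addrC. Qed.


Lemma rowform_eq m (A B : 'M[R]_(N, m)) : (forall X : 'rV_N, X *m A = X *m B) -> A = B.
Proof. by move=> H; apply/row_matrixP => i; rewrite !rowE H. Qed.

Lemma bilform_eq (A B : 'M[R]_N) :
  (forall X Y : 'rV_N, (X *m A *m Y^T) 0 0 = (X *m B *m Y^T) 0 0) -> A = B.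
Proof.
move=> H; apply/matrixP => i j; have := H (fb i) (fb j).
rewrite /fb trmx_delta -!rowE -!colE !mxE => ->; done.
Qed.

Lemma Phieta : Phi *m eta = 0.
Proof.
apply: rowform_eq => X; rewrite mulmx0 mulmxA; apply/matrixP => i j.
by rewrite !ord1 [RHS]mxE; exact: lin_Phi0 X.
Qed.

Lemma GPhiT : Gm *m Phi^T = - (Phi *m Gm).
Proof.
apply: bilform_eq => X Y.
have e : forall M : 'M[R]_(1,1), (- M) 0 0 = - M 0 0 by move=> M; rewrite mxE.
transitivity (g X (Y *m Phi)); first by rewrite /bil trmx_mul !mulmxA.
rewrite mulmxN mulNmx e !mulmxA; have := bil_skew X Y; rewrite /bil => ->.
by rewrite opprK.
Qed.

Lemma rv_fb (v : 'rV[R]_N) j : (v *m (fb j)^T) 0 0 = v 0 j.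
Proof. by rewrite /fb trmx_delta -colE mxE. Qed.

Lemma fb_cv m (c : 'M[R]_(N, m)) j k : (fb j *m c) 0 k = c j k.
Proof. by rewrite /fb -rowE mxE. Qed.

Lemma bil_fbr X j : g X (fb j) = (X *m Gm) 0 j.
Proof. by rewrite /bil rv_fb. Qed.

Lemma lin_fb j : et (fb j) = eta j 0.
Proof. by rewrite /lin fb_cv. Qed.

Lemma xiG : xi *m Gm = eta^T.
Proof. by apply/rowP => j; rewrite -bil_fbr bil_xil lin_fb mxE. Qed.


Local Notation Gi := (invmx Gm).

Lemma GiT : Gi^T = Gi.
Proof. by rewrite trmx_inv Gsym. Qed.

Lemma GGi : Gm *m Gi = 1%:M. Proof. exact: mulmxV. Qed.
Lemma GiG : Gi *m Gm = 1%:M. Proof. exact: mulVmx. Qed.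

Lemma PhiTGi : Phi^T *m Gi = - (Gi *m Phi).
Proof.
rewrite -[Phi^T]mul1mx -GiG -(mulmxA Gi) GPhiT mulmxN mulNmx.
by rewrite !mulmxA -(mulmxA _ Gm) GGi mulmx1.
Qed.

Lemma Phi3 : Phi *m Phi *m Phi = Phi.
Proof. by apply: rowform_eq => X; rewrite !mulmxA PhiPhi hPhi. Qed.

Lemma tr_idem r (A : 'M[R]_r.+1) : A *m A = A -> \tr A = (\rank A)%:R.
Proof.
move=> AA; have := mulmx_base A; have := col_base_full A; have := row_base_free A.
move: (col_base A) (row_base A) => C B Bf Cf dA.
have BC : B *m C = 1%:M.
  have e1 : C *m (B *m C *m B) = C *m B.
    by rewrite !mulmxA dA -(mulmxA A) dA AA.
  have e2 := row_full_inj Cf e1.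
  by apply: (row_free_inj Bf); rewrite mul1mx.
have -> : \tr A = \tr (C *m B) by rewrite dA.
by rewrite mxtrace_mulC BC mxtrace1.
Qed.

Lemma two_neq0 : (2 : R) != 0.
Proof. by rewrite pnatr_eq0. Qed.

Lemma trPhi : \tr Phi = 0.
Proof.
have two := two_neq0.
set S1 := Phi *m Phi + Phi; set S2 := Phi *m Phi - Phi.
have P3 := Phi3.
have P4 : Phi *m Phi *m (Phi *m Phi) = Phi *m Phi by rewrite mulmxA P3.
have P3' : Phi *m (Phi *m Phi) = Phi by rewrite mulmxA P3.
have S1S1 : S1 *m S1 = 2 *: S1.
  rewrite /S1 mulmxDl !mulmxDr P4 P3 P3' scaler_nat mulr2n.
  by rewrite addrACA [Phi + _]addrC.
have S2S2 : S2 *m S2 = 2 *: S2.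
  rewrite /S2 mulmxBl !mulmxBr P4 P3 P3' scaler_nat mulr2n.
  by rewrite opprB.
set P := 2^-1 *: S1; set Q := 2^-1 *: S2.
have idem : forall S : 'M[R]_N, S *m S = 2 *: S -> (2^-1 *: S) *m (2^-1 *: S) = 2^-1 *: S.
  move=> S SS; rewrite -scalemxAl -scalemxAr SS !scalerA.
  by rewrite -mulrA mulVf // mulr1.
have PQ : P - Q = Phi.
  rewrite /P /Q -scalerBr /S1 /S2 opprB [Phi - _]addrC addrACA subrr add0r -mulr2n -scaler_nat scalerA.
  by rewrite mulVf // scale1r.
have rP : \rank P = n.
  set K := eigenspace Phi 1.
  have KP : K *m Phi = K by apply/eqP; rewrite -[X in _ == X]scale1r; apply/eqP/eigenspaceP.
  have sub1 : (K <= kermx eta)%MS.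
    by apply/sub_kermxP; rewrite -KP -mulmxA Phieta mulmx0.
  suff e : \rank P = \rank K by rewrite e -[in RHS]rk1 (capmx_idPl sub1).
  apply/eqmx_rank/andP; split.
    apply/eigenspaceP; rewrite scale1r /P -scalemxAl /S1 mulmxDl P3 addrC; done.
  have KPe : K *m P = K.
    rewrite /P -scalemxAr /S1 mulmxDr mulmxA KP KP -mulr2n -scaler_nat scalerA.
    by rewrite mulVf // scale1r.
  by rewrite -{1}KPe submxMl.
have rQ : \rank Q = n.
  set K := eigenspace Phi (-1).
  have KP : K *m Phi = - K by rewrite -scaleN1r; apply/eigenspaceP.
  have sub1 : (K <= kermx eta)%MS.
    apply/sub_kermxP; rewrite -[K]opprK -KP mulNmx -mulmxA Phieta mulmx0.
    by rewrite oppr0.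
  suff e : \rank Q = \rank K by rewrite e -[in RHS]rkm1 (capmx_idPl sub1).
  apply/eqmx_rank/andP; split.
    apply/eigenspaceP; rewrite scaleN1r /Q -scalemxAl /S2 mulmxBl P3.
    by rewrite -scalerN opprB.
  have KPe : K *m Q = K.
    rewrite /Q -scalemxAr /S2 mulmxBr mulmxA KP mulNmx KP !opprK.
    by rewrite -mulr2n -scaler_nat scalerA mulVf // scale1r.
  by rewrite -{1}KPe submxMl.
rewrite -PQ linearB /= !tr_idem ?idem // rP rQ subrr //.
Qed.


Lemma sumG W b : \sum_a g (fb a) W * Gi a b = W 0 b.
Proof.
transitivity ((W *m Gm *m Gi) 0 b); last by rewrite -mulmxA GGi mulmx1.
set M := W *m Gm; rewrite [RHS]mxE; apply: eq_bigr => a _.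
by rewrite bil_sym bil_fbr.
Qed.

Lemma absorb f W : islin f ->
  \sum_a \sum_q Gi a q * (g (fb a) W * f (fb q)) = f W.
Proof.
move=> L; rewrite exchange_big (islin_exp W L) /=; apply: eq_bigr => q _.
rewrite -sumG mulr_suml; apply: eq_bigr => a _; ring.
Qed.

Lemma absorbPhi f W : islin f ->
  \sum_a \sum_q Gi a q * (g (fb a *m Phi) W * f (fb q)) = - f (W *m Phi).
Proof.
move=> L; rewrite -(absorb _ L) -sumrN; apply: eq_bigr => a _.
rewrite -sumrN; apply: eq_bigr => q _; rewrite bil_skew; ring.
Qed.

Lemma islin_comb f1 f2 a b : islin f1 -> islin f2 -> islin (fun X => a * f1 X + b * f2 X).
Proof. by move=> L1 L2 c X Y; rewrite L1 L2; ring. Qed.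

Lemma islin_sumf (I : finType) (F : I -> 'rV[R]_N -> R) :
  (forall i, islin (F i)) -> islin (fun X => \sum_i F i X).
Proof.
move=> L c X Y; rewrite mulr_sumr -big_split /=; apply: eq_bigr => i _; exact: L.
Qed.

Lemma islin_mx f (M : 'M[R]_N) : islin f -> islin (fun X => f (X *m M)).
Proof. by move=> L c X Y /=; rewrite mulmxDl -scalemxAl L. Qed.

Lemma islin_h f : islin f -> islin (fun X => f (h X)).
Proof. by move=> L c X Y /=; rewrite h_lin L. Qed.

Lemma islin_mulc f a : islin f -> islin (fun X => a * f X).
Proof. by move=> L c X Y; rewrite L; ring. Qed.

Lemma islin_ext f1 f2 : islin f1 -> (forall X, f2 X = f1 X) -> islin f2.
Proof. by move=> L e c X Y; rewrite !e L. Qed.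

Lemma islin_entry (M : 'M[R]_(N, n.*2)) j : islin (fun X => (X *m M) 0 j).
Proof. by move=> c X Y; rewrite mulmxDl -scalemxAl !mxE. Qed.

Definition ML (T : tensor3 R N) :=
  [/\ forall Y Z, islin (fun X => T X Y Z), forall X Z, islin (fun Y => T X Y Z)
    & forall X Y, islin (fun Z => T X Y Z)].
Definition hinv (T : tensor3 R N) := forall X Y Z, T X Y Z = T (h X) (h Y) (h Z).
Definition Good (T : tensor3 R N) :=
  [/\ ML T, hinv T, (forall X Y Z, T X Z Y = - T X Y Z)
    & (forall X Y Z, T X (Y *m Phi) Z = T X Y (Z *m Phi))].
Definition J (T : tensor3 R N) : tensor3 R N := fun X Y Z => T (X *m Phi) Y (Z *m Phi).

Lemma hinv1 T X Y Z : hinv T -> T (h X) Y Z = T X Y Z.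
Proof. by move=> H; rewrite [RHS]H H !h_h. Qed.
Lemma hinv2 T X Y Z : hinv T -> T X (h Y) Z = T X Y Z.
Proof. by move=> H; rewrite [RHS]H H !h_h. Qed.
Lemma hinv3 T X Y Z : hinv T -> T X Y (h Z) = T X Y Z.
Proof. by move=> H; rewrite [RHS]H H !h_h. Qed.

Lemma Good_xi3 T X Y : Good T -> T X Y xi = 0.
Proof. by case=> [[_ _ L3] H _ _]; rewrite -(hinv3 _ _ _ H) h_xi (islin0 (L3 X Y)). Qed.
Lemma Good_xi1 T Y Z : Good T -> T xi Y Z = 0.
Proof. by case=> [[L1 _ _] H _ _]; rewrite -(hinv1 _ _ _ H) h_xi (islin0 (L1 Y Z)). Qed.

Lemma GoodJJ T X Y Z : Good T -> J (J T) X Y Z = T X Y Z.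
Proof. by case=> _ H _ _; rewrite /J !PhiPhi hinv1 // hinv3. Qed.

Lemma Good_ext T S : Good T -> (forall X Y Z, S X Y Z = T X Y Z) -> Good S.
Proof.
case=> [[L1 L2 L3] H Sk Sw] e; split; first split.
- by move=> Y Z; apply: (islin_ext (L1 Y Z)) => X; rewrite e.
- by move=> X Z; apply: (islin_ext (L2 X Z)) => Y; rewrite e.
- by move=> X Y; apply: (islin_ext (L3 X Y)) => Z; rewrite e.
- by move=> X Y Z; rewrite !e H.
- by move=> X Y Z; rewrite !e Sk.
- by move=> X Y Z; rewrite !e Sw.
Qed.

Lemma Good_comb T S a b : Good T -> Good S ->
  Good (fun X Y Z => a * T X Y Z + b * S X Y Z).
Proof.
case=> [[L1 L2 L3] H Sk Sw] [[K1 K2 K3] H' Sk' Sw']; split; first split.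
- by move=> Y Z; apply: islin_comb.
- by move=> X Z; apply: islin_comb.
- by move=> X Y; apply: islin_comb.
- by move=> X Y Z; rewrite H H'.
- by move=> X Y Z; rewrite Sk Sk'; ring.
- by move=> X Y Z; rewrite Sw Sw'.
Qed.

Lemma Good_J T : Good T -> Good (J T).
Proof.
case=> [[L1 L2 L3] H Sk Sw]; split; first split.
- by move=> Y Z; apply: (islin_mx _ (L1 Y (Z *m Phi))).
- by move=> X Z; apply: L2.
- by move=> X Y; apply: (islin_mx _ (L3 (X *m Phi) Y)).
- by move=> X Y Z; rewrite /J !h_Phi hinv2.
- by move=> X Y Z; rewrite /J Sk Sw.
- by move=> X Y Z; rewrite /J Sw.
Qed.

Lemma Good_m1 T : Good T -> Good (m1 Phi T).
Proof.
move=> G; apply: Good_ext (Good_comb (2^-1) (- 2^-1) G (Good_J G)) _.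
by move=> X Y Z; rewrite /m1 /J; ring.
Qed.

Lemma Good_m2 T : Good T -> Good (m2 Phi T).
Proof.
move=> G; apply: Good_ext (Good_comb (2^-1) (2^-1) G (Good_J G)) _.
by move=> X Y Z; rewrite /m2 /J; ring.
Qed.


Definition psi (t : 'rV[R]_N -> R) : tensor3 R N := fun X Y Z =>
  g X (Y *m Phi) * t (Z *m Phi) - g X (Z *m Phi) * t (Y *m Phi)
  - g (X *m Phi) (Y *m Phi) * t Z + g (X *m Phi) (Z *m Phi) * t Y.

Definition cst : R := ((n.-1).*2)%:R^-1.

Lemma m3E T X Y Z : m3 Phi Gm T X Y Z = T X Y Z - cst * psi (theta Gm T) X Y Z.
Proof. by []. Qed.

Definition tlin (t : 'rV[R]_N -> R) := islin t /\ t xi = 0.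

Lemma tlin_h t X : tlin t -> t (h X) = t X.
Proof. by case=> L t0; rewrite /hproj (islinB _ _ L) (islinZ _ _ L) t0 mulr0 subr0. Qed.

Lemma mulPhi_lin a (X Y : 'rV[R]_N) : (a *: X + Y) *m Phi = a *: (X *m Phi) + Y *m Phi.
Proof. by rewrite mulmxDl -scalemxAl. Qed.

Lemma bilD1 a (X1 X2 W : 'rV[R]_N) : g (a *: X1 + X2) W = a * g X1 W + g X2 W.
Proof. exact: islin_bill. Qed.
Lemma bilD2 a (X1 X2 W : 'rV[R]_N) : g W (a *: X1 + X2) = a * g W X1 + g W X2.
Proof. exact: islin_bilr. Qed.

Ltac normg :=
 repeat first [
   match goal with |- context [bil Gm (?X *m Phi) (?Y *m Phi)] => rewrite (GPhi X Y) end
 | match goal with |- context [?X *m Phi *m Phi] => rewrite (PhiPhi X) end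
 | match goal with |- context [bil Gm (hproj xi eta ?X) ?Y] => rewrite (bil_hl X Y) end
 | match goal with |- context [bil Gm ?X (hproj xi eta ?Y)] => rewrite (bil_hr X Y) end
 | match goal with |- context [bil Gm (?X *m Phi) ?Y] => rewrite (bil_skew X Y) end
 | match goal with |- context [lin eta (?X *m Phi)] => rewrite (lin_Phi0 X) end
 | match goal with |- context [lin eta (hproj xi eta ?X)] => rewrite (lin_h X) end
 | match goal with |- context [hproj xi eta ?X *m Phi] => rewrite (h_Phi X) end
 | match goal with |- context [hproj xi eta (hproj xi eta ?X)] => rewrite (h_h X) end ].

Ltac normt tl :=
  repeat match goal with |- context [?t (hproj xi eta ?X)] => rewrite (tlin_h X tl) end.

Lemma Good_psi t : tlin t -> Good (psi t).
Proof.
move=> tl; have [L t0] := tl; split; first split.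
- by move=> Y Z c X1 X2; rewrite /psi !mulPhi_lin !bilD1; ring.
- by move=> X Z c Y1 Y2; rewrite /psi !mulPhi_lin !bilD2 !L; ring.
- by move=> X Y c Z1 Z2; rewrite /psi !mulPhi_lin !bilD2 !L; ring.
- move=> X Y Z; rewrite /psi; normg; normt tl; ring.
- by move=> X Y Z; rewrite /psi; ring.
- move=> X Y Z; rewrite /psi; normg; normt tl; ring.
Qed.

Lemma J_psi t X Y Z : tlin t -> J (psi t) X Y Z = - psi t X Y Z.
Proof.
move=> tl; rewrite /J /psi; normg; normt tl; ring.
Qed.


Lemma sum2_combo (F1 F2 F3 F4 : 'I_N -> 'I_N -> R) c1 c3 :
  \sum_a \sum_b (F1 a b * c1 - F2 a b - F3 a b * c3 + F4 a b) =
  (\sum_a \sum_b F1 a b) * c1 - (\sum_a \sum_b F2 a b)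
  - (\sum_a \sum_b F3 a b) * c3 + \sum_a \sum_b F4 a b.
Proof.
under eq_bigr => a _ do rewrite big_split !sumrB /= -!mulr_suml.
by rewrite big_split !sumrB /= -!mulr_suml.
Qed.

Lemma trace_sum : \sum_a \sum_b Gi a b * g (fb a) (fb b *m Phi) = 0.
Proof.
rewrite exchange_big /= -[RHS]trPhi /mxtrace; apply: eq_bigr => b _.
by rewrite -(fb_cv Phi b b) -sumG; apply: eq_bigr => a _; rewrite mulrC.
Qed.

Lemma fb_diag b : (fb b) 0 b = 1.
Proof. by rewrite /fb mxE !eqxx. Qed.

Lemma sumGPhiPhi : \sum_a \sum_b Gi a b * g (fb a *m Phi) (fb b *m Phi) = 1 - N%:R.
Proof.
rewrite exchange_big /=.
transitivity (\sum_b (xi 0 b * et (fb b) - (fb b) 0 b)).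
  apply: eq_bigr => b _; rewrite -!sumG mulr_suml -sumrB; apply: eq_bigr => a _.
  by rewrite GPhi -(bil_xi (fb a)); ring.
rewrite sumrB -(islin_exp xi islin_lin) etaxi.
by under eq_bigr => b _ do rewrite fb_diag; rewrite sumr_const card_ord.
Qed.

Lemma nat_arith : (((n.-1).*2)%:R : R) = (n.*2)%:R - 2.
Proof.
have e : (n.*2 = (n.-1).*2 + 2)%N by rewrite -!muln2; lia.
by rewrite [in RHS]e natrD addrK.
Qed.

Lemma theta_psi t Z : tlin t -> theta Gm (psi t) Z = ((n.-1).*2)%:R * t Z.
Proof.
move=> tl; have [L t0] := tl.
transitivity (\sum_a \sum_b ((Gi a b * g (fb a) (fb b *m Phi)) * t (Z *m Phi)
   - Gi a b * (g (fb a) (Z *m Phi) * t (fb b *m Phi))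
   - (Gi a b * g (fb a *m Phi) (fb b *m Phi)) * t Z
   + Gi a b * (g (fb a *m Phi) (Z *m Phi) * t (fb b)))).
  by apply: eq_bigr => a _; apply: eq_bigr => b _; rewrite /psi; ring.
rewrite sum2_combo trace_sum sumGPhiPhi.
have s2 := absorb (Z *m Phi) (islin_mx Phi L); rewrite /= in s2; rewrite s2.
rewrite absorbPhi // !PhiPhi !(tlin_h _ tl) nat_arith.
have e1 : ((n.*2).+1%:R : R) = (n.*2)%:R + 1 by rewrite -addn1 natrD.
rewrite e1; ring.
Qed.

Lemma theta_ext T S Z : (forall X Y Z, T X Y Z = S X Y Z) -> theta Gm T Z = theta Gm S Z.
Proof. by move=> e; apply: eq_bigr => a _; apply: eq_bigr => b _; rewrite e. Qed.

Lemma theta_comb T S a b Z :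
  theta Gm (fun X Y Z => a * T X Y Z + b * S X Y Z) Z = a * theta Gm T Z + b * theta Gm S Z.
Proof.
rewrite /theta !mulr_sumr -big_split /=; apply: eq_bigr => i _.
rewrite !mulr_sumr -big_split /=; apply: eq_bigr => j _; ring.
Qed.

Lemma tlin_theta T : Good T -> tlin (theta Gm T).
Proof.
move=> G; have [[_ _ L3] _ _ _] := G; split.
  apply: islin_sumf => a; apply: islin_sumf => b; exact: islin_mulc.
by rewrite /theta big1 // => a _; rewrite big1 // => b _; rewrite Good_xi3 // mulr0.
Qed.

Lemma cst_k : cst * ((n.-1).*2)%:R = 1.
Proof. by rewrite mulVf // pnatr_eq0 -muln2 muln_eq0 /=; lia. Qed.

Lemma theta_m3 T Z : Good T -> theta Gm (m3 Phi Gm T) Z = 0.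
Proof.
move=> G; rewrite (theta_ext _ (S := fun X Y Z => 1 * T X Y Z + (- cst) * psi (theta Gm T) X Y Z)).
  rewrite theta_comb theta_psi; last exact: tlin_theta.
  transitivity (theta Gm T Z - (cst * ((n.-1).*2)%:R) * theta Gm T Z); first ring.
  by rewrite cst_k; ring.
by move=> X Y Z'; rewrite m3E; ring.
Qed.

Lemma Good_m3 T : Good T -> Good (m3 Phi Gm T).
Proof.
move=> G; apply: Good_ext (Good_comb 1 (- cst) G (Good_psi (tlin_theta G))) _.
by move=> X Y Z; rewrite m3E; ring.
Qed.


Lemma Esub : (E <= kermx eta)%MS.
Proof. by case/andP: Eker. Qed.
Lemma kerE : (kermx eta <= E)%MS.
Proof. by case/andP: Eker. Qed.

Lemma Eeta : E *m eta = 0.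
Proof. exact/sub_kermxP/Esub. Qed.

Lemma et_rowE j : et (row j E) = 0.
Proof. by rewrite /lin -row_mul Eeta row0 mxE. Qed.

Lemma inD_sub v : et v = 0 -> (v <= E)%MS.
Proof.
move=> e; apply: submx_trans kerE; apply/sub_kermxP; apply/matrixP => i j.
by rewrite !ord1 [RHS]mxE.
Qed.

Lemma D_exp v : et v = 0 -> v = \sum_j (coords E v) 0 j *: row j E.
Proof. by move=> e; rewrite -mulmx_sum_row /coords mulmxKpV // inD_sub. Qed.

Lemma EpinvE : E *m pinvmx E = 1%:M.
Proof.
apply: (row_free_inj Efree); by rewrite mulmxKpV // mul1mx.
Qed.

Lemma coords_row j i : (coords E (row j E)) 0 i = (j == i)%:R.
Proof. by rewrite /coords rowE -mulmxA EpinvE mulmx1 mxE eqxx /= eq_sym. Qed.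

Lemma islin_coords i : islin (fun v => (coords E v) 0 i).
Proof. exact: islin_entry. Qed.

Lemma h_D v : et v = 0 -> h v = v.
Proof. by move=> e; rewrite /hproj e scale0r subr0. Qed.

Lemma islin_add f1 f2 : islin f1 -> islin f2 -> islin (fun X => f1 X + f2 X).
Proof. by move=> L1 L2 c X Y; rewrite L1 L2; ring. Qed.

Lemma islin_form (I : finType) (c : I -> R) (F : I -> 'rV[R]_N -> R) d f :
  (forall i, islin (F i)) -> islin f -> islin (fun X => \sum_i c i * F i X + d * f X).
Proof.
move=> L Lf; apply: islin_add; last exact: islin_mulc.
by apply: islin_sumf => i; apply: islin_mulc.
Qed.

Lemma islin_form2 (I : finType) (c : I -> 'rV[R]_N -> R) (K : I -> R) f L :
  (forall i, islin (c i)) -> islin f -> islin (fun Y => \sum_i c i Y * K i + f Y * L).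
Proof.
move=> Lc Lf; apply: islin_add.
  apply: islin_sumf => i c' X Y; rewrite Lc; ring.
by move=> c' X Y; rewrite Lf; ring.
Qed.

Lemma nondeg U V : (forall Z, g U Z = g V Z) -> U = V.
Proof.
move=> H; have : U *m Gm = V *m Gm.
  by apply/rowP => j; rewrite -!bil_fbr H.
by move/(congr1 (mulmx^~ Gi)); rewrite -!mulmxA GGi !mulmx1.
Qed.

Lemma bilmx (X Z : 'rV[R]_N) (M : 'M[R]_N) :
  (X *m M *m Z^T) 0 0 = \sum_a \sum_s X 0 a * M a s * Z 0 s.
Proof.
rewrite mxE; under eq_bigr => s _ do rewrite !mxE mulr_suml.
by rewrite exchange_big.
Qed.

Section Forward.
Variables (T : tensor3 R N) (Ae : 'I_(n.*2) -> 'M[R]_N) (Axi : 'M[R]_N).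
Hypothesis HAxi : forall X : 'rV[R]_N, (X *m Axi <= kermx eta)%MS.
Hypothesis Hskew : forall X (i j : 'I_(n.*2)),
  g (X *m Ae i) (row j E) = - g (X *m Ae j) (row i E).
Hypothesis HPhi : forall X (i : 'I_(n.*2)),
  X *m Aext E Ae (row i E *m Phi) = - (X *m Ae i *m Phi) - g (X *m Axi) (row i E) *: xi.
Hypothesis HT : forall X Y Z,
  T X Y Z = \sum_(i < n.*2) (coords E (h Y)) 0 i * g (X *m Ae i) Z
            + et Y * g (X *m Axi) (Z *m Phi).
Hypothesis Hh : hinv T.

Lemma T_D X u Z : et u = 0 -> T X u Z = \sum_i (coords E u) 0 i * g (X *m Ae i) Z.
Proof. by move=> e; rewrite HT h_D // e mul0r addr0. Qed.

Lemma TDD X u v : et u = 0 -> et v = 0 ->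
  T X u v = \sum_i \sum_j (coords E u) 0 i * (coords E v) 0 j * g (X *m Ae i) (row j E).
Proof.
move=> eu ev; rewrite T_D //; apply: eq_bigr => i _.
rewrite {1}(D_exp ev) (islin_sum _ _ (islin_bilr _)) mulr_sumr.
by apply: eq_bigr => j _; ring.
Qed.

Lemma gAext X w Z : g (X *m Aext E Ae w) Z = \sum_i (coords E w) 0 i * g (X *m Ae i) Z.
Proof.
rewrite /Aext mulmx_sumr; under eq_bigr => i _ do rewrite -scalemxAr.
by rewrite (islin_sum _ _ (islin_bill Z)).
Qed.

Lemma Good_of_calF : Good T.
Proof.
split; first split.
- move=> Y Z; apply: (islin_ext _ (fun X => HT X Y Z)).
  apply: (@islin_form _ _ (fun i X => g (X *m Ae i) Z) _ (fun X => g (X *m Axi) (Z *m Phi))).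
    by move=> i; exact: (islin_mx (Ae i) (islin_bill Z)).
  exact: (islin_mx Axi (islin_bill (Z *m Phi))).
- move=> X Z; apply: (islin_ext _ (fun Y => HT X Y Z)).
  apply: (@islin_form2 _ (fun i Y => (coords E (h Y)) 0 i)).
    by move=> i; exact: (islin_h (islin_coords i)).
  exact: islin_lin.
- move=> X Y; apply: (islin_ext _ (fun Z => HT X Y Z)).
  apply: (@islin_form _ _ (fun i Z => g (X *m Ae i) Z) _ (fun Z => g (X *m Axi) (Z *m Phi))).
    by move=> i; exact: islin_bilr.
  exact: (islin_mx Phi (islin_bilr _)).
- exact: Hh.
- move=> X Y Z.
  have e1 : T X Z Y = T X (h Z) (h Y) by rewrite hinv2 // hinv3.
  have e2 : T X Y Z = T X (h Y) (h Z) by rewrite hinv2 // hinv3.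
  rewrite e1 e2 !TDD ?lin_h // exchange_big -sumrN; apply: eq_bigr => i _.
  rewrite -sumrN; apply: eq_bigr => j _; rewrite Hskew; ring.
- move=> X Y Z.
  have e1 : T X (Y *m Phi) Z = T X ((h Y) *m Phi) (h Z) by rewrite h_Phi hinv3.
  have e2 : T X Y (Z *m Phi) = T X (h Y) ((h Z) *m Phi) by rewrite h_Phi hinv2.
  rewrite e1 e2.
  move: (h Y) (h Z) (lin_h Y) (lin_h Z) => u v eu ev.
  rewrite T_D ?lin_Phi0 // T_D //.
  rewrite -gAext {1}(D_exp eu) mulmx_suml.
  have Lw : islin (fun w => g (X *m Aext E Ae w) v).
    apply: (@islin_ext (fun w => \sum_i (coords E w) 0 i * g (X *m Ae i) v)); last by move=> w; rewrite gAext.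
    apply: islin_sumf => i c X1 X2; rewrite islin_coords; ring.
  under eq_bigr => j _ do rewrite -scalemxAl.
  rewrite (islin_sum _ _ Lw); apply: eq_bigr => j _; congr (_ * _).
  rewrite HPhi.
  rewrite (islinB _ _ (islin_bill v)) (islinN _ (islin_bill v)) (islinZ _ _ (islin_bill v)).
  by rewrite bil_xil ev mulr0 subr0 bil_skew opprK.
Qed.

End Forward.


Lemma bil0l X : g 0 X = 0.
Proof. exact: (islin0 (islin_bill X)). Qed.
Lemma bil0r X : g X 0 = 0.
Proof. exact: (islin0 (islin_bilr X)). Qed.

Section Backward.
Variable T : tensor3 R N.
Hypothesis G : Good T.

Definition AeB (i : 'I_(n.*2)) : 'M[R]_N :=
  (\matrix_(a, s) T (fb a) (row i E) (fb s)) *m Gi.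

Lemma gAeB X i Z : g (X *m AeB i) Z = T X (row i E) Z.
Proof.
have [[L1 _ L3] _ _ _] := G.
rewrite /bil /AeB mulmxA -(mulmxA _ Gi) GiG mulmx1 bilmx.
rewrite (islin_exp X (L1 _ _)); apply: eq_bigr => a _.
rewrite (islin_exp Z (L3 _ _)) mulr_sumr; apply: eq_bigr => s _.
by rewrite mxE; ring.
Qed.

Lemma gAextB X w Z : et w = 0 -> g (X *m Aext E AeB w) Z = T X w Z.
Proof.
have [[_ L2 _] _ _ _] := G.
move=> e; rewrite gAext {2}(D_exp e) (islin_sum _ _ (L2 _ _)).
by apply: eq_bigr => i _; rewrite gAeB.
Qed.

Lemma calF_of_Good : calF Phi xi eta Gm E T.
Proof.
have [[L1 L2 L3] Hh Sk Sw] := G.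
exists AeB, 0; split; [|split; [|split; [|split; [|split]]]].
- by move=> X; rewrite mulmx0 sub0mx.
- by move=> X i j; rewrite !gAeB Sk.
- move=> X i; apply: nondeg => Z.
  rewrite gAextB ?lin_Phi0 // mulmx0 bil0l scale0r subr0.
  by rewrite (islinN _ (islin_bill Z)) bil_skew opprK gAeB Sw.
- by move=> X i; rewrite mulmx0 bil0l oppr0 -bil_xi gAeB Good_xi3.
- by move=> X; rewrite mulmx0 (islin0 islin_lin).
- move=> X Y Z; rewrite mulmx0 bil0l mulr0 addr0.
  under eq_bigr => i _ do rewrite gAeB.
  by rewrite -(islin_sum _ _ (L2 X Z)) -D_exp ?lin_h // hinv2.
Qed.

End Backward.

Lemma W1_Good T : W1 Phi xi eta Gm E T <-> Good T.
Proof.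
split.
  case=> [[Ae [Axi [H1 [H2 [H3 [H4 [H5 H6]]]]]]] Hh].
  by apply: (Good_of_calF H2 H3 H6 Hh).
by move=> G; split; [exact: calF_of_Good | case: G].
Qed.


Lemma tip_flat T1 T2 : tip Gm T1 T2 =
  \sum_a \sum_q \sum_b \sum_r \sum_c \sum_s
    (Gi a q * Gi b r * Gi c s * T1 (fb a) (fb b) (fb c) * T2 (fb q) (fb r) (fb s)).
Proof.
rewrite /tip; apply: eq_bigr => a _.
transitivity (\sum_b \sum_q \sum_c \sum_r \sum_s
    (Gi a q * Gi b r * Gi c s * T1 (fb a) (fb b) (fb c) * T2 (fb q) (fb r) (fb s))).
  by apply: eq_bigr => b _; rewrite exchange_big.
transitivity (\sum_q \sum_b \sum_c \sum_r \sum_s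
    (Gi a q * Gi b r * Gi c s * T1 (fb a) (fb b) (fb c) * T2 (fb q) (fb r) (fb s))).
  by rewrite exchange_big.
by apply: eq_bigr => q _; apply: eq_bigr => b _; rewrite exchange_big.
Qed.

Lemma tipE1 T1 T2 : tip Gm T1 T2 =
  \sum_a \sum_q Gi a q * (\sum_b \sum_r Gi b r * (\sum_c \sum_s Gi c s *
     (T1 (fb a) (fb b) (fb c) * T2 (fb q) (fb r) (fb s)))).
Proof.
rewrite tip_flat; apply: eq_bigr => a _; apply: eq_bigr => q _.
rewrite mulr_sumr; apply: eq_bigr => b _; rewrite mulr_sumr; apply: eq_bigr => r _.
rewrite !mulr_sumr; apply: eq_bigr => c _; rewrite !mulr_sumr; apply: eq_bigr => s _.
ring.
Qed.

Lemma reorder6 (H : 'I_N -> 'I_N -> 'I_N -> 'I_N -> 'I_N -> 'I_N -> R) :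
  \sum_a \sum_q \sum_b \sum_r \sum_c \sum_s H a q b r c s =
  \sum_c \sum_s \sum_b \sum_r \sum_a \sum_q H a q b r c s.
Proof.
transitivity (\sum_(p1 : 'I_N * 'I_N) \sum_(p2 : 'I_N * 'I_N) \sum_(p3 : 'I_N * 'I_N)
    H p1.1 p1.2 p2.1 p2.2 p3.1 p3.2).
  rewrite pair_bigA; apply: eq_bigr => p1 _; rewrite pair_bigA; apply: eq_bigr => p2 _.
  by rewrite pair_bigA.
transitivity (\sum_(p3 : 'I_N * 'I_N) \sum_(p2 : 'I_N * 'I_N) \sum_(p1 : 'I_N * 'I_N)
    H p1.1 p1.2 p2.1 p2.2 p3.1 p3.2).
  rewrite exchange_big; under eq_bigr => p2 _ do rewrite exchange_big.
  by rewrite exchange_big.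
symmetry; rewrite pair_bigA; apply: eq_bigr => p3 _; rewrite pair_bigA; apply: eq_bigr => p2 _.
by rewrite pair_bigA.
Qed.

Lemma tipE3 T1 T2 : tip Gm T1 T2 =
  \sum_c \sum_s Gi c s * (\sum_b \sum_r Gi b r * (\sum_a \sum_q Gi a q *
     (T1 (fb a) (fb b) (fb c) * T2 (fb q) (fb r) (fb s)))).
Proof.
rewrite tip_flat reorder6; apply: eq_bigr => c _; apply: eq_bigr => s _.
rewrite mulr_sumr; apply: eq_bigr => b _; rewrite mulr_sumr; apply: eq_bigr => r _.
rewrite !mulr_sumr; apply: eq_bigr => a _; rewrite !mulr_sumr; apply: eq_bigr => q _.
ring.
Qed.


Lemma reorder4 (H : 'I_N -> 'I_N -> 'I_N -> 'I_N -> R) :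
  \sum_a \sum_q \sum_i \sum_j H a q i j = \sum_i \sum_j \sum_a \sum_q H a q i j.
Proof.
transitivity (\sum_(p1 : 'I_N * 'I_N) \sum_(p2 : 'I_N * 'I_N) H p1.1 p1.2 p2.1 p2.2).
  by rewrite pair_bigA; apply: eq_bigr => p1 _; rewrite pair_bigA.
transitivity (\sum_(p2 : 'I_N * 'I_N) \sum_(p1 : 'I_N * 'I_N) H p1.1 p1.2 p2.1 p2.2).
  by rewrite exchange_big.
symmetry; by rewrite pair_bigA; apply: eq_bigr => p1 _; rewrite pair_bigA.
Qed.

Lemma entry3 (A B C : 'M[R]_N) i j :
  (A^T *m B *m C) i j = \sum_a \sum_q A a i * B a q * C q j.
Proof.
rewrite mxE; under eq_bigr => q _ do rewrite mxE mulr_suml.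
rewrite exchange_big; apply: eq_bigr => a _; apply: eq_bigr => q _.
by rewrite mxE.
Qed.

Lemma islin_mulr f c : islin f -> islin (fun X => f X * c).
Proof. by move=> L a X Y; rewrite L; ring. Qed.

Lemma pair_M (W : 'rV[R]_N -> 'rV[R]_N -> R) (M M' : 'M[R]_N) :
  (forall v, islin (fun u => W u v)) -> (forall u, islin (W u)) ->
  \sum_a \sum_q Gi a q * W (fb a *m M) (fb q *m M') =
  \sum_a \sum_q (M^T *m Gi *m M') a q * W (fb a) (fb q).
Proof.
move=> L1 L2.
transitivity (\sum_a \sum_q \sum_i \sum_j (M a i * Gi a q * M' q j * W (fb i) (fb j))).
  apply: eq_bigr => a _; apply: eq_bigr => q _.
  have e := islin_exp (fb a *m M) (L1 (fb q *m M')); rewrite /= in e; rewrite e mulr_sumr.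
  apply: eq_bigr => i _; have e2 := islin_exp (fb q *m M') (L2 (fb i)).
  rewrite e2 !mulr_sumr; apply: eq_bigr => j _; rewrite !fb_cv; ring.
rewrite reorder4; apply: eq_bigr => i _; apply: eq_bigr => j _.
rewrite entry3 mulr_suml; apply: eq_bigr => a _; rewrite mulr_suml.
by apply: eq_bigr => q _.
Qed.

Lemma mxNe (A : 'M[R]_N) i j : (- A) i j = - A i j.
Proof. by rewrite mxE. Qed.

Lemma transferPhi (W : 'rV[R]_N -> 'rV[R]_N -> R) :
  (forall v, islin (fun u => W u v)) -> (forall u, islin (W u)) ->
  \sum_a \sum_q Gi a q * W (fb a) (fb q *m Phi) =
  - \sum_a \sum_q Gi a q * W (fb a *m Phi) (fb q).
Proof.
move=> L1 L2.
transitivity (\sum_a \sum_q Gi a q * W (fb a *m 1%:M) (fb q *m Phi)).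
  by apply: eq_bigr => a _; apply: eq_bigr => q _; rewrite mulmx1.
transitivity (- \sum_a \sum_q Gi a q * W (fb a *m Phi) (fb q *m 1%:M)); last first.
  by congr (- _); apply: eq_bigr => a _; apply: eq_bigr => q _; rewrite mulmx1.
rewrite !pair_M // trmx1 mul1mx mulmx1 PhiTGi -sumrN; apply: eq_bigr => a _.
by rewrite -sumrN; apply: eq_bigr => q _; rewrite mxNe; ring.
Qed.

Lemma tip_ext T1 T2 S1 S2 : (forall X Y Z, T1 X Y Z = S1 X Y Z) ->
  (forall X Y Z, T2 X Y Z = S2 X Y Z) -> tip Gm T1 T2 = tip Gm S1 S2.
Proof.
move=> e1 e2; rewrite /tip; do 6 (apply: eq_bigr => ? _).
by rewrite e1 e2.
Qed.

Lemma tip_combl T1 T2 S a b :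
  tip Gm (fun X Y Z => a * T1 X Y Z + b * T2 X Y Z) S = a * tip Gm T1 S + b * tip Gm T2 S.
Proof.
rewrite /tip; do 6 (rewrite !mulr_sumr -big_split /=; apply: eq_bigr => ? _).
ring.
Qed.

Lemma tip_sw T S : tip Gm (fun X Y Z => T X Z Y) S = tip Gm T (fun X Y Z => S X Z Y).
Proof.
rewrite /tip; apply: eq_bigr => a _; rewrite exchange_big.
apply: eq_bigr => b _; apply: eq_bigr => c _; apply: eq_bigr => q _.
rewrite exchange_big; apply: eq_bigr => r _; apply: eq_bigr => s _.
ring.
Qed.


Lemma tip_J A B : ML A -> ML B -> tip Gm (J A) B = tip Gm A (J B).
Proof.
case=> [LA1 LA2 LA3] [LB1 LB2 LB3].
pose OL u v := \sum_b \sum_r Gi b r * (\sum_c \sum_s Gi c s *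
   (A u (fb b) (fb c *m Phi) * B v (fb r) (fb s))).
have OL1 : forall v, islin (fun u => OL u v).
  move=> v; apply: islin_sumf => b; apply: islin_sumf => r; apply: islin_mulc.
  apply: islin_sumf => c; apply: islin_sumf => s; apply: islin_mulc.
  exact: islin_mulr.
have OL2 : forall u, islin (OL u).
  move=> u; apply: islin_sumf => b; apply: islin_sumf => r; apply: islin_mulc.
  apply: islin_sumf => c; apply: islin_sumf => s; apply: islin_mulc.
  exact: islin_mulc.
rewrite !tipE1 /J.
transitivity (\sum_a \sum_q Gi a q * OL (fb a *m Phi) (fb q)); first by [].
symmetry.
transitivity (\sum_a \sum_q Gi a q * (- OL (fb a) (fb q *m Phi))).
  apply: eq_bigr => a _; apply: eq_bigr => q _; congr (_ * _).
  rewrite /OL -sumrN; apply: eq_bigr => b _; rewrite -sumrN; apply: eq_bigr => r _.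
  rewrite -mulrN; congr (_ * _).
  have e := @transferPhi (fun x y => A (fb a) (fb b) x * B (fb q *m Phi) (fb r) y).
  rewrite /= in e; rewrite e //.
    by move=> v; apply: islin_mulr.
  by move=> u; apply: islin_mulc.
transitivity (- \sum_a \sum_q Gi a q * OL (fb a) (fb q *m Phi)).
  rewrite -sumrN; apply: eq_bigr => a _; rewrite -sumrN; apply: eq_bigr => q _.
  by rewrite mulrN.
by rewrite (transferPhi OL1 OL2) opprK.
Qed.

Lemma tip_F3 A B : Good A -> Good B -> (forall X Y Z, J A X Y Z = - A X Y Z) ->
  (forall X Y Z, J B X Y Z = B X Y Z) -> tip Gm A B = 0.
Proof.
move=> GA GB JA JB.
have e1 : tip Gm A B = tip Gm A (J B) by apply: tip_ext.
have e2 : tip Gm (J A) B = - tip Gm A B.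
  rewrite (@tip_ext _ _ (fun X Y Z => (-1) * A X Y Z + 0 * A X Y Z) B).
  - by rewrite tip_combl; ring.
  - by move=> X Y Z; rewrite JA; ring.
  - by [].
have [MA _ _ _] := GA; have [MB _ _ _] := GB.
move: e2; rewrite tip_J // -e1 => e2; lra.
Qed.

Definition psi' (t : 'rV[R]_N -> R) : tensor3 R N := fun X Y Z =>
  g X (Y *m Phi) * t (Z *m Phi) - g (X *m Phi) (Y *m Phi) * t Z.

Lemma sum2_lin2 (F1 F2 : 'I_N -> 'I_N -> R) x y :
  \sum_a \sum_b (x * F1 a b + y * F2 a b) =
  x * (\sum_a \sum_b F1 a b) + y * (\sum_a \sum_b F2 a b).
Proof.
rewrite !mulr_sumr -big_split /=; apply: eq_bigr => a _.
by rewrite !mulr_sumr -big_split.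
Qed.

Lemma tip_psi' t S : tlin t -> Good S -> (forall X Y Z, J S X Y Z = - S X Y Z) ->
  (forall Z, theta Gm S Z = 0) -> tip Gm (psi' t) S = 0.
Proof.
move=> tl GS JS th; have [[L1 L2 L3] Hh Sk Sw] := GS.
rewrite tipE3 big1 // => c _; rewrite big1 // => s _.
apply/eqP; rewrite mulf_eq0; apply/orP; right; apply/eqP.
transitivity (t (fb c *m Phi) * (\sum_b \sum_r Gi b r * S (fb b *m Phi) (fb r) (fb s))
  + t (fb c) * (\sum_b \sum_r Gi b r * S (fb b) (fb r) (fb s))).
  rewrite -sum2_lin2; apply: eq_bigr => b _; apply: eq_bigr => r _.
  transitivity (Gi b r * (t (fb c *m Phi) *
      (\sum_a \sum_q Gi a q * (g (fb a) (fb b *m Phi) * S (fb q) (fb r) (fb s)))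
    + (- t (fb c)) *
      (\sum_a \sum_q Gi a q * (g (fb a *m Phi) (fb b *m Phi) * S (fb q) (fb r) (fb s))))).
    congr (_ * _); rewrite -sum2_lin2; apply: eq_bigr => a _; apply: eq_bigr => q _.
    rewrite /psi'; ring.
  have e1 := absorb (fb b *m Phi) (L1 (fb r) (fb s)); rewrite /= in e1; rewrite e1.
  have e2 := absorbPhi (fb b *m Phi) (L1 (fb r) (fb s)); rewrite /= in e2; rewrite e2.
  by rewrite PhiPhi hinv1 //; ring.
have tau2 : \sum_b \sum_r Gi b r * S (fb b *m Phi) (fb r) (fb s) = 0.
  apply: (@eq_trans _ _ (- theta Gm S (fb s *m Phi))); last by rewrite th oppr0.
  rewrite /theta -sumrN; apply: eq_bigr => b _; rewrite -sumrN.
  apply: eq_bigr => r _; rewrite -mulrN; congr (_ * _).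
  rewrite -JS /J PhiPhi hinv3 //.
have := th (fb s); rewrite /theta => ->; rewrite tau2; ring.
Qed.

Lemma tip_psi t S : tlin t -> Good S -> (forall X Y Z, J S X Y Z = - S X Y Z) ->
  (forall Z, theta Gm S Z = 0) -> tip Gm (psi t) S = 0.
Proof.
move=> tl GS JS th; have [[L1 L2 L3] Hh Sk Sw] := GS.
have e1 : tip Gm (psi t) S =
    1 * tip Gm (psi' t) S + (-1) * tip Gm (fun X Y Z => psi' t X Z Y) S.
  by rewrite -tip_combl; apply: tip_ext => X Y Z //; rewrite /psi /psi'; ring.
have e2 : tip Gm (fun X Y Z => psi' t X Z Y) S =
    tip Gm (psi' t) (fun X Y Z => (-1) * S X Y Z + 0 * S X Y Z).
  by rewrite tip_sw; apply: tip_ext => // X Y Z; rewrite Sk; ring.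
rewrite e1 e2.
rewrite (tip_psi' tl GS JS th) tip_psi' //; first by ring.
- exact: Good_comb.
- by move=> X Y Z; have := JS X Y Z; rewrite /J => ->; ring.
- by move=> Z; rewrite theta_comb !th; ring.
Qed.


Section Gact.
Variable A : 'M[R]_N.
Hypothesis HA : inG Phi xi eta Gm A.
Local Notation B := (invmx A).

Lemma Aunit : A \in unitmx. Proof. by case: HA. Qed.

Lemma BPhi : Phi *m B = B *m Phi.
Proof.
have [Au APhi _ _ _] := HA.
transitivity (B *m (A *m Phi) *m B); first by rewrite mulmxA mulVmx // mul1mx.
by rewrite APhi mulmxA -mulmxA mulmxV // mulmx1.
Qed.

Lemma XPhiB (X : 'rV[R]_N) : X *m Phi *m B = X *m B *m Phi.
Proof. by rewrite -mulmxA BPhi mulmxA. Qed.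

Lemma xiB : xi *m B = xi.
Proof. have [Au _ xA _ _] := HA. by rewrite -{1}xA mulmxK. Qed.

Lemma etaB X : et (X *m B) = et X.
Proof. have [Au _ _ eA _] := HA. by rewrite -[in RHS](mulmxKV Au X) eA. Qed.

Lemma gB X Y : g (X *m B) (Y *m B) = g X Y.
Proof. have [Au _ _ _ gA] := HA. by rewrite -[in RHS](mulmxKV Au X) -[in RHS](mulmxKV Au Y) gA. Qed.

Lemma hB X : h (X *m B) = h X *m B.
Proof. by rewrite /hproj etaB mulmxBl -scalemxAl xiB. Qed.

Lemma BGiB : B^T *m Gi *m B = Gi.
Proof.
have [Au _ _ _ gA] := HA.
have AG : A *m Gm *m A^T = Gm.
  by apply: bilform_eq => X Y; rewrite !mulmxA -(mulmxA _ A^T) -trmx_mul; exact: (gA X Y).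
have BG : B *m Gm = Gm *m A^T.
  by rewrite -{1}AG !mulmxA mulVmx // mul1mx.
have e : B^T *m Gi *m B *m Gm = 1%:M.
  by rewrite -mulmxA BG mulmxA -(mulmxA _ Gi) GiG mulmx1 -trmx_mul mulmxV // trmx1.
by rewrite -[LHS]mulmx1 -GGi mulmxA e mul1mx.
Qed.

Lemma Good_gact T : Good T -> Good (gact A T).
Proof.
case=> [[L1 L2 L3] Hh Sk Sw]; split; first split.
- by move=> Y Z; apply: (islin_mx _ (L1 _ _)).
- by move=> X Z; apply: (islin_mx _ (L2 _ _)).
- by move=> X Y; apply: (islin_mx _ (L3 _ _)).
- by move=> X Y Z; rewrite /gact -!hB -Hh.
- by move=> X Y Z; rewrite /gact Sk.
- by move=> X Y Z; rewrite /gact !XPhiB Sw.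
Qed.

Lemma theta_gact T Z : ML T -> theta Gm (gact A T) Z = theta Gm T (Z *m B).
Proof.
case=> [L1 L2 L3]; rewrite /theta /gact.
have e := @pair_M (fun u v => T u v (Z *m B)) B B (fun v => L1 v _) (fun u => L2 u _).
by rewrite /= in e; rewrite e BGiB.
Qed.

Lemma psi_ext t t' X Y Z : (forall W, t W = t' W) -> psi t X Y Z = psi t' X Y Z.
Proof. by move=> e; rewrite /psi !e. Qed.

Lemma psi_gact t X Y Z :
  psi t (X *m B) (Y *m B) (Z *m B) = psi (fun W => t (W *m B)) X Y Z.
Proof. by rewrite /psi -!XPhiB !gB. Qed.

Lemma m3_gact T X Y Z : ML T ->
  m3 Phi Gm (gact A T) X Y Z = gact A (m3 Phi Gm T) X Y Z.
Proof.
move=> MT; rewrite m3E [in RHS]/gact m3E psi_gact; congr (_ - _ * _).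
by apply: psi_ext => W; rewrite theta_gact.
Qed.

Lemma m1_gact T X Y Z : m1 Phi (gact A T) X Y Z = gact A (m1 Phi T) X Y Z.
Proof. by rewrite /m1 /gact !XPhiB. Qed.

Lemma m2_gact T X Y Z : m2 Phi (gact A T) X Y Z = gact A (m2 Phi T) X Y Z.
Proof. by rewrite /m2 /gact !XPhiB. Qed.

End Gact.


Local Notation P1 := (F1 Phi xi eta Gm E).
Local Notation P2 := (F2 Phi xi eta Gm E).
Local Notation P3 := (F3 Phi xi eta Gm E).
Local Notation W11' := (W11 Phi xi eta Gm E).
Local Notation W1' := (W1 Phi xi eta Gm E).

Lemma W11_Good T : W11' T -> Good T.
Proof.
case=> S [/W1_Good GS e]; apply: Good_ext (Good_m1 GS) _; exact: e.
Qed.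

Lemma W11_J T : W11' T -> forall X Y Z, J T X Y Z = - T X Y Z.
Proof.
case=> S [/W1_Good GS e] X Y Z; rewrite /J !e /m1.
have := GoodJJ X Y Z GS; rewrite /J => ->; ring.
Qed.

Lemma F3_props T : P3 T -> Good T /\ forall X Y Z, J T X Y Z = T X Y Z.
Proof.
case=> S [/W1_Good GS e]; split; first by apply: Good_ext (Good_m2 GS) _; exact: e.
move=> X Y Z; rewrite /J !e /m2.
have := GoodJJ X Y Z GS; rewrite /J => ->; ring.
Qed.

Lemma F1_props T : P1 T ->
  [/\ Good T, forall X Y Z, J T X Y Z = - T X Y Z
    & forall X Y Z, T X Y Z = cst * psi (theta Gm T) X Y Z].
Proof.
case=> W e; split; [exact: W11_Good | exact: W11_J |].
move=> X Y Z; have := e X Y Z; rewrite m3E => /eqP; rewrite subr_eq0 => /eqP //.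
Qed.

Lemma F2_props T : P2 T ->
  [/\ Good T, forall X Y Z, J T X Y Z = - T X Y Z & forall Z, theta Gm T Z = 0].
Proof.
case=> S [W e]; have GS := W11_Good W; have JS := W11_J W.
have tl := tlin_theta GS.
split.
- by apply: Good_ext (Good_m3 GS) _; exact: e.
- move=> X Y Z; rewrite /J !e !m3E.
  have := JS X Y Z; rewrite /J => ->.
  have := J_psi X Y Z tl; rewrite /J => ->; ring.
- by move=> Z; rewrite (theta_ext _ e) theta_m3.
Qed.

Lemma Good_sum3 T1 T2 T3 : Good T1 -> Good T2 -> Good T3 -> Good (tadd3 T1 T2 T3).
Proof.
move=> G1 G2 G3.
apply: Good_ext (Good_comb 1 1 (Good_comb 1 1 G1 G2) G3) _.
by move=> X Y Z; rewrite /tadd3; ring.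
Qed.

Lemma Good_psiC t : tlin t -> Good (fun X Y Z => cst * psi t X Y Z).
Proof.
move=> tl; apply: Good_ext (Good_comb cst 0 (Good_psi tl) (Good_psi tl)) _.
by move=> X Y Z; ring.
Qed.

Lemma part_decomp T : W1' T <->
  exists T1 T2 T3, [/\ P1 T1, P2 T2, P3 T3 & teq T (tadd3 T1 T2 T3)].
Proof.
split.
  move=> W; have G := proj1 (W1_Good T) W.
  have GU := Good_m1 G; have tlU := tlin_theta GU.
  pose T1 := fun X Y Z => cst * psi (theta Gm (m1 Phi T)) X Y Z.
  exists T1, (m3 Phi Gm (m1 Phi T)), (m2 Phi T); split.
  - have G1 : Good T1 := Good_psiC tlU.
    split.
      exists T1; split; first exact/W1_Good.
      move=> X Y Z; rewrite /m1.
      have := J_psi X Y Z tlU; rewrite /J /T1 => ->; by field.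
    have th1 : forall Z, theta Gm T1 Z = theta Gm (m1 Phi T) Z.
      move=> Z; rewrite (@theta_ext _ (fun X Y Z => cst * psi (theta Gm (m1 Phi T)) X Y Z
            + 0 * psi (theta Gm (m1 Phi T)) X Y Z)); last by move=> X Y Z'; rewrite /T1; ring.
      rewrite theta_comb theta_psi //.
      transitivity ((cst * ((n.-1).*2)%:R) * theta Gm (m1 Phi T) Z); first ring.
      by rewrite cst_k mul1r.
    move=> X Y Z /=; rewrite m3E (psi_ext _ _ _ th1) /T1; exact: subrr.
  - by exists (m1 Phi T); split => //; exists T; split.
  - by exists T; split.
  - by move=> X Y Z; rewrite /tadd3 m3E /T1 /m1 /m2; field.
case=> T1 [T2 [T3 [H1 H2 H3 e]]].
have [G1 _ _] := F1_props H1; have [G2 _ _] := F2_props H2; have [G3 _] := F3_props H3.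
apply/W1_Good; apply: Good_ext (Good_sum3 G1 G2 G3) _; exact: e.
Qed.

Lemma part_direct T1 T2 T3 S1 S2 S3 : P1 T1 -> P2 T2 -> P3 T3 -> P1 S1 -> P2 S2 -> P3 S3 ->
  teq (tadd3 T1 T2 T3) (tadd3 S1 S2 S3) -> [/\ teq T1 S1, teq T2 S2 & teq T3 S3].
Proof.
move=> HT1 HT2 HT3 HS1 HS2 HS3 e.
have [GT1 JT1 pT1] := F1_props HT1; have [GT2 JT2 thT2] := F2_props HT2.
have [GT3 JT3] := F3_props HT3.
have [GS1 JS1 pS1] := F1_props HS1; have [GS2 JS2 thS2] := F2_props HS2.
have [GS3 JS3] := F3_props HS3.
have e3 : teq T3 S3.
  move=> X Y Z; have e0 := e X Y Z; have e1 := e (X *m Phi) Y (Z *m Phi).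
  move: e1; rewrite /tadd3.
  have := JT1 X Y Z; have := JT2 X Y Z; have := JT3 X Y Z.
  have := JS1 X Y Z; have := JS2 X Y Z; have := JS3 X Y Z.
  rewrite /J => -> -> -> -> -> -> e1.
  move: e0; rewrite /tadd3 => e0; lra.
have e12 : forall X Y Z, 1 * T1 X Y Z + 1 * T2 X Y Z = 1 * S1 X Y Z + 1 * S2 X Y Z.
  move=> X Y Z; have := e X Y Z; rewrite /tadd3 e3 => e0; lra.
have th : forall Z, theta Gm T1 Z = theta Gm S1 Z.
  move=> Z; have := theta_ext Z e12; rewrite !theta_comb thT2 thS2.
  by rewrite !mul1r !addr0.
have e1 : teq T1 S1.
  by move=> X Y Z; rewrite pT1 pS1 (psi_ext _ _ _ th).
split=> // X Y Z; have := e12 X Y Z; rewrite e1; lra.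
Qed.

Lemma part_orth12 T1 T2 : P1 T1 -> P2 T2 -> tip Gm T1 T2 = 0.
Proof.
move=> H1 H2; have [G1 _ p1] := F1_props H1; have [G2 J2 th2] := F2_props H2.
rewrite (@tip_ext _ _ (fun X Y Z => cst * psi (theta Gm T1) X Y Z + 0 * psi (theta Gm T1) X Y Z) T2).
- by rewrite tip_combl (tip_psi (tlin_theta G1) G2 J2 th2); ring.
- by move=> X Y Z; rewrite {1}p1; ring.
- by [].
Qed.

Lemma part_orth13 T1 T3 : P1 T1 -> P3 T3 -> tip Gm T1 T3 = 0.
Proof.
move=> H1 H3; have [G1 J1 _] := F1_props H1; have [G3 J3] := F3_props H3.
exact: tip_F3.
Qed.

Lemma part_orth23 T2 T3 : P2 T2 -> P3 T3 -> tip Gm T2 T3 = 0.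
Proof.
move=> H2 H3; have [G2 J2 _] := F2_props H2; have [G3 J3] := F3_props H3.
exact: tip_F3.
Qed.

Lemma W1_gact A T : inG Phi xi eta Gm A -> W1' T -> W1' (gact A T).
Proof. by move=> HA /W1_Good G; apply/W1_Good; apply: Good_gact. Qed.

Lemma W11_gact A T : inG Phi xi eta Gm A -> W11' T -> W11' (gact A T).
Proof.
move=> HA [S [W e]]; exists (gact A S); split; first exact: W1_gact.
by move=> X Y Z; rewrite (m1_gact HA); apply: e.
Qed.

Lemma part_inv A T : inG Phi xi eta Gm A ->
  [/\ P1 T -> P1 (gact A T), P2 T -> P2 (gact A T) & P3 T -> P3 (gact A T)].
Proof.
move=> HA; split.
- case=> W e; split; first exact: W11_gact.
  have [M _ _ _] := W11_Good W.
  by move=> X Y Z; rewrite (m3_gact HA) //; apply: e.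
- case=> S [W e]; exists (gact A S); split; first exact: W11_gact.
  have [M _ _ _] := W11_Good W.
  by move=> X Y Z; rewrite (m3_gact HA) //; apply: e.
- case=> S [W e]; exists (gact A S); split; first exact: W1_gact.
  by move=> X Y Z; rewrite (m2_gact HA); apply: e.
Qed.

End Proof.

Unset Implicit Arguments.

Theorem proposition3p4 (R : realType) (n : nat)
    (Phi : 'M[R]_(n.*2.+1)) (xi : 'rV[R]_(n.*2.+1)) (eta : 'cV[R]_(n.*2.+1))
    (Gm : 'M[R]_(n.*2.+1)) (E : 'M[R]_(n.*2, n.*2.+1)) :
  (2 <= n)%N ->
  apc_struct Phi xi eta Gm ->
  is_basis_D E eta ->
  let P1 := F1 Phi xi eta Gm E in
  let P2 := F2 Phi xi eta Gm E in
  let P3 := F3 Phi xi eta Gm E in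
  (* W1 = F1 + F2 + F3 *)
      (forall T, W1 Phi xi eta Gm E T <->
         exists T1 T2 T3, [/\ P1 T1, P2 T2, P3 T3 & teq T (tadd3 T1 T2 T3)]) /\
      (* the sum is direct *)
      (forall T1 T2 T3 S1 S2 S3, P1 T1 -> P2 T2 -> P3 T3 -> P1 S1 -> P2 S2 -> P3 S3 ->
         teq (tadd3 T1 T2 T3) (tadd3 S1 S2 S3) -> [/\ teq T1 S1, teq T2 S2 & teq T3 S3]) /\
      (* mutual orthogonality *)
      (forall T1 T2, P1 T1 -> P2 T2 -> tip Gm T1 T2 = 0) /\
      (forall T1 T3, P1 T1 -> P3 T3 -> tip Gm T1 T3 = 0) /\
      (forall T2 T3, P2 T2 -> P3 T3 -> tip Gm T2 T3 = 0) /\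
      (* G-invariance *)
      (forall A T, inG Phi xi eta Gm A ->
         [/\ P1 T -> P1 (gact A T), P2 T -> P2 (gact A T) & P3 T -> P3 (gact A T)]).
Proof.
move=> n2 [xiPhi [etaPhi [etaxi [Phi2 [rk1 [rkm1 [Gsym [Gunit GPhi]]]]]]]] /andP [Efree Eker].
move=> P1 P2 P3.
split; first by move=> T; eapply part_decomp; eassumption.
split; first by move=> *; eapply part_direct; eassumption.
split; first by move=> *; eapply part_orth12; eassumption.
split; first by move=> *; eapply part_orth13; eassumption.
split; first by move=> *; eapply part_orth23; eassumption.
by move=> A T HA; eapply part_inv; eassumption.
Qed.
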